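(* Every graph $G=(V,E)$ on $n\ge2$ vertices can be decomposed into an edge-disjoint union of subgraphs $G_1\uplus G_2\uplus\cdots\uplus G_\ell$ such that (a) each vertex appears in at most $O(\log n)$ of the subgraphs, and (b) each subgraph $G_i$ is $2$-uniformly-dense.
   Context: A graph $H=(U,F)$ with $n_H=|U|$ vertices and $m_H=|F|$ edges is $\alpha$-uniformly-dense if (i) the minimum degree of $H$ is at least $1/\alpha$ times its average degree $2m_H/n_H$, and (ii) for every nonempty $S\subseteq U$, the average degree $2|F(S,S)|/|S|$ of the subgraph induced by $S$ is at most $\alpha$ times $2m_H/n_H$. Here $F(S,S)$ is the set of edges with both endpoints in $S$. *)

(* Defs.v *)
From mathcomp Require Import all_boot all_order all_algebra.
Set Implicit Arguments. Unset Strict Implicit. Unset Printing Implicit Defensive.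
Import Order.TTheory GRing.Theory Num.Theory.
Local Open Scope ring_scope.

Definition simple_edges (T : finType) (E : {set {set T}}) : Prop :=
  forall e, e \in E -> #|e| = 2.

Definition is_graph (T : finType) (U : {set T}) (F : {set {set T}}) : Prop :=
  simple_edges F /\ forall e, e \in F -> e \subset U.

Definition deg (T : finType) (F : {set {set T}}) (v : T) : nat :=
  #|[set e in F | v \in e]|.

Definition edges_in (T : finType) (F : {set {set T}}) (S : {set T}) : {set {set T}} :=
  [set e in F | e \subset S].

Definition avg_deg (T : finType) (U : {set T}) (F : {set {set T}}) : rat :=
  (2 * #|F|)%N%:R / #|U|%:R.

Definition uniformly_dense (T : finType) (alpha : rat)
    (U : {set T}) (F : {set {set T}}) : Prop :=
  (forall v, v \in U -> alpha^-1 * avg_deg U F <= (deg F v)%:R) /\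
  (forall S : {set T}, S \subset U -> S != set0 ->
     (2 * #|edges_in F S|)%N%:R / #|S|%:R <= alpha * avg_deg U F).

Definition edge_decomposition (T : finType) (E : {set {set T}})
    (Hs : seq ({set T} * {set {set T}})) : Prop :=
  (forall i, (i < size Hs)%N ->
     is_graph (nth (set0, set0) Hs i).1 (nth (set0, set0) Hs i).2 /\
     (nth (set0, set0) Hs i).2 \subset E) /\
  (forall i j, (i < size Hs)%N -> (j < size Hs)%N -> i <> j ->
     [disjoint (nth (set0, set0) Hs i).2 & (nth (set0, set0) Hs j).2]) /\
  (forall e, e \in E -> exists2 i, (i < size Hs)%N & e \in (nth (set0, set0) Hs i).2).

Definition appearances (T : finType) (Hs : seq ({set T} * {set {set T}})) (v : T) : nat :=
  count (fun H : {set T} * {set {set T}} => v \in H.1) Hs.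

(* Main.v *)
Require Import Defs.
From mathcomp Require Import all_boot all_order all_algebra.
From mathcomp Require Import zify.

Module M1.
Set Implicit Arguments. Unset Strict Implicit. Unset Printing Implicit Defensive.
Import Order.TTheory GRing.Theory Num.Theory.

Section Aux.
Variable T : finType.
Implicit Types (E F : {set {set T}}) (tl : {set T} -> T).

Definition outset E tl v := [set e in E | tl e == v].
Definition od E tl v := #|outset E tl v|.
Definition darc E tl : rel T :=
  fun y z => [exists e in E, (tl e == y) && (z \in e) && (z != y)].
Definition valid E tl := forall e, e \in E -> tl e \in e.
Definition Phi E tl k := (\sum_v (od E tl v - k))%N.
Definition flip tl e0 (x : T) := fun e => if e == e0 then x else tl e.

Lemma card_part (I J : finType) (A : {set I}) (B : {set J}) (p : I -> J) :
  (forall i, i \in A -> p i \in B) ->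
  #|A| = (\sum_(j in B) #|[set i in A | p i == j]|)%N.
Proof.
move=> H; rewrite -sum1_card (partition_big p (mem B)) //=.
by apply: eq_bigr => j _; rewrite -sum1_card; apply: eq_bigl => i; rewrite inE.
Qed.

Lemma two_elems (e : {set T}) u x z : #|e| = 2 -> u \in e -> x \in e -> u != x ->
  z \in e -> (z == u) || (z == x).
Proof.
move=> He hu hx hux hz.
have : [set u; x] == e.
  rewrite eqEcard He cards2 hux andbT; apply/subsetP => y; rewrite !inE.
  by case/orP => /eqP ->.
by move/eqP => Ee; rewrite -Ee !inE in hz.
Qed.

Section Flip.
Variables (E : {set {set T}}) (tl : {set T} -> T) (e0 : {set T}) (u x : T).
Hypotheses (He0 : e0 \in E) (Hu : tl e0 = u) (Hxu : x != u).

Lemma od_flip_u : od E tl u = (od E (flip tl e0 x) u).+1.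
Proof.
rewrite /od -add1n.
have -> : outset E tl u = e0 |: outset E (flip tl e0 x) u.
  apply/setP => e; rewrite !inE /flip; case: (eqVneq e e0) => [->|//].
  by rewrite He0 Hu eqxx.
rewrite cardsU1 !inE /flip eqxx (negbTE Hxu) andbF //.
Qed.

Lemma od_flip_x : od E (flip tl e0 x) x = (od E tl x).+1.
Proof.
rewrite /od -add1n.
have -> : outset E (flip tl e0 x) x = e0 |: outset E tl x.
  apply/setP => e; rewrite !inE /flip; case: (eqVneq e e0) => [->|//].
  by rewrite He0 eqxx.
by rewrite cardsU1 !inE Hu eq_sym (negbTE Hxu) andbF.
Qed.

Lemma od_flip_o v : v != u -> v != x -> od E (flip tl e0 x) v = od E tl v.
Proof.
move=> hvu hvx; rewrite /od; apply: eq_card => e; rewrite !inE /flip.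
case: (eqVneq e e0) => [->|//]; rewrite Hu He0 /=.
by rewrite eq_sym (negbTE hvx) eq_sym (negbTE hvu).
Qed.

Lemma valid_flip : valid E tl -> x \in e0 -> valid E (flip tl e0 x).
Proof. by move=> hv hx e he; rewrite /flip; case: eqP => [->|_]; auto. Qed.
End Flip.

Lemma split2 (f : T -> nat) u x : u != x ->
  (\sum_v f v = f u + f x + \sum_(v | (v != u) && (v != x)) f v)%N.
Proof.
move=> hux; rewrite (bigD1 u) //= (bigD1 x) /= 1?eq_sym // addnA.
by congr (_ + _)%N; apply: eq_bigl => v; rewrite andbC.
Qed.

Lemma sum2 (f g : T -> nat) u x : u != x ->
  (forall v, v != u -> v != x -> f v = g v) ->
  (\sum_v f v + g u + g x = \sum_v g v + f u + f x)%N.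
Proof.
move=> hux H; rewrite (split2 f hux) (split2 g hux).
rewrite (eq_bigr g); first by lia.
by move=> v /andP[a b]; rewrite H.
Qed.

End Aux.

End M1.
Module M2.
Import M1.
Set Implicit Arguments. Unset Strict Implicit. Unset Printing Implicit Defensive.

Section Improve.
Variable T : finType.
Implicit Types (E F : {set {set T}}) (tl : {set T} -> T).

Lemma darc_flip E tl e0 u x y z : simple_edges E -> e0 \in E -> tl e0 = u ->
  u \in e0 -> x \in e0 -> x != u -> y != u -> z != u ->
  darc E (flip tl e0 x) y z = darc E tl y z.
Proof.
move=> hs he0 hu hue hx hxu hyu hzu.
rewrite /darc; apply/existsP/existsP => -[e /andP[he H]]; exists e; rewrite he /=;
  move: H; rewrite /flip; case: (eqVneq e e0) => [->|//].
- case/andP => /andP[/eqP hxy hz] hzy.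
  have hux : u != x by rewrite eq_sym.
  have := two_elems (hs _ he0) hue hx hux hz.
  by rewrite -hxy in hzy; rewrite (negbTE hzu) (negbTE hzy).
- by rewrite hu eq_sym (negbTE hyu).
Qed.

Lemma Phi_flip E tl e0 u x k : e0 \in E -> tl e0 = u -> x != u ->
  (Phi E (flip tl e0 x) k + (od E tl u - k) + (od E tl x - k) =
   Phi E tl k + (od E (flip tl e0 x) u - k) + (od E (flip tl e0 x) x - k))%N.
Proof.
move=> he0 htl hxu; rewrite /Phi; apply: sum2; first by rewrite eq_sym.
by move=> v hvu hvx; rewrite (od_flip_o he0 htl).
Qed.

Lemma improve k E : simple_edges E -> forall p tl u, valid E tl ->
  (forall v, od E tl v <= 2*k) -> k < od E tl u -> path (darc E tl) u p ->
  uniq (u :: p) -> od E tl (last u p) < k ->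
  exists tl2, [/\ valid E tl2, (forall v, od E tl2 v <= 2*k) & Phi E tl2 k < Phi E tl k].
Proof.
move=> hs; elim=> [|x p IH] tl u hv hb hu.
  by move=> _ _ /= hl; lia.
rewrite /= => /andP[hux hp] /andP[hnu hun] hl.
case/existsP: hux => e0 /andP[he0 /andP[/andP[/eqP htl hx] hxu]].
have hue : u \in e0 by rewrite -htl hv.
have o_u := od_flip_u he0 htl hxu.
have o_x := od_flip_x he0 htl hxu.
have o_o := od_flip_o (x := x) he0 htl.
have hv1 : valid E (flip tl e0 x) by apply: valid_flip.
have hP := Phi_flip k he0 htl hxu.
have hb1 : od E tl x < 2 * k -> forall v, od E (flip tl e0 x) v <= 2*k.
  move=> hx2 v; case: (eqVneq v u) => [->|hvu].
    by have := hb u; lia.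
  case: (eqVneq v x) => [->|hvx]; first by lia.
  by rewrite o_o //; apply: hb.
case: (ltngtP (od E tl x) k) => hxk.
- exists (flip tl e0 x); split => //; first by apply: hb1; lia.
  by lia.
- by apply: (IH tl x).
- have hk : 0 < k by lia.
  have hl' : last x p != u.
    by apply/eqP => hh; move: hnu; rewrite -hh mem_last.
  have hlx : last x p != x by apply/eqP => hh; rewrite hh in hl; lia.
  have [tl2 [hv2 hb2 hP2]] : exists tl2, [/\ valid E tl2,
     (forall v, od E tl2 v <= 2*k) & Phi E tl2 k < Phi E (flip tl e0 x) k].
    apply: (IH _ x) => //.
    + by apply: hb1; lia.
    + by lia.
    + have heq : {in predC1 u &, darc E (flip tl e0 x) =2 darc E tl}.
        by move=> y z hy hz; apply: (darc_flip hs he0 htl hue hx hxu hy hz).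
      rewrite (eq_in_path heq) //; apply/allP => y hy /=.
      by apply/eqP => hh; move: hnu; rewrite -hh hy.
    + by rewrite o_o.
  by exists tl2; split => //; lia.
Qed.
End Improve.

End M2.
Module M3.
Import M1.
Import M2.
Set Implicit Arguments. Unset Strict Implicit. Unset Printing Implicit Defensive.

Section Reorient.
Variable T : finType.
Implicit Types (E F : {set {set T}}) (tl : {set T} -> T).

Lemma reorient k E tl : simple_edges E -> valid E tl -> (forall v, od E tl v <= 2*k) ->
  exists tl', exists S : {set T}, [/\ valid E tl', (forall v, od E tl' v <= 2*k),
     (forall e, e \in E -> tl' e \in S -> e \subset S),
     (forall v, v \in S -> k <= od E tl' v) &
     (forall v, v \notin S -> od E tl' v <= k)].
Proof.
move=> hs.
suff H : forall n tl, Phi E tl k < n -> valid E tl -> (forall v, od E tl v <= 2*k) ->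
  exists tl', exists S : {set T}, [/\ valid E tl', (forall v, od E tl' v <= 2*k),
     (forall e, e \in E -> tl' e \in S -> e \subset S),
     (forall v, v \in S -> k <= od E tl' v) &
     (forall v, v \notin S -> od E tl' v <= k)].
  by move=> hv hb; apply: (H (Phi E tl k).+1 tl).
elim=> [//|n IH] tl0 hP hv hb.
case: (boolP [exists u, (k < od E tl0 u) &&
   [exists b, (od E tl0 b < k) && connect (darc E tl0) u b]]).
- case/existsP => u /andP[hu /existsP[b /andP[hbk /connectP[p hp hlast]]]].
  case: (shortenP hp) hlast => p' hp' hu' _ hlast.
  have [tl2 [hv2 hb2 hP2]] := improve hs hv hb hu hp' hu' (ltac:(by rewrite -hlast)).
  by apply: (IH tl2) => //; lia.
- rewrite negb_exists => /forallP hn.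
  exists tl0, [set v | ~~ [exists b, (od E tl0 b < k) && connect (darc E tl0) v b]].
  split => //.
  + move=> e he; rewrite inE => htl; apply/subsetP => w hw; rewrite inE.
    apply: contra htl => /existsP[b /andP[hbk hc]]; apply/existsP; exists b; rewrite hbk /=.
    case: (eqVneq w (tl0 e)) => [<-|hw']; first done.
    apply: connect_trans hc; apply: connect1; apply/existsP; exists e.
    by rewrite he eqxx hw hw'.
  + move=> v; rewrite inE => hv'; rewrite leqNgt; apply: contra hv' => hlt.
    by apply/existsP; exists v; rewrite hlt connect0.
  + move=> v; rewrite inE negbK => hc; have := hn v.
    by rewrite hc andbT -leqNgt.
Qed.
End Reorient.

End M3.
Module M4.
Import M1.
Import M2.
Import M3.
Set Implicit Arguments. Unset Strict Implicit. Unset Printing Implicit Defensive.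
Import Order.TTheory GRing.Theory Num.Theory.

Section GL.
Variable T : finType.
Implicit Types (E F : {set {set T}}) (tl : {set T} -> T).

Lemma sum_tail_le F tl (S : {set T}) (A : {set {set T}}) K :
  A \subset F -> valid F tl -> (forall e, e \in A -> tl e \in S) ->
  (forall v, od F tl v <= K) -> #|A| <= K * #|S|.
Proof.
move=> hAF hv hAS hK.
rewrite (card_part hAS) mulnC -sum_nat_const; apply: leq_sum => v _.
apply: leq_trans (hK v); apply: subset_leq_card; apply/subsetP => e.
by rewrite !inE => /andP[he ->]; rewrite (subsetP hAF _ he).
Qed.

Lemma GL (U : {set T}) F tl K : valid F tl -> (forall e, e \in F -> e \subset U) ->
  (forall v, od F tl v <= K) -> (forall v, v \in U -> #|F| <= deg F v * #|U|) ->
  K * #|U| <= 2 * #|F| -> uniformly_dense (2%:R : rat) U F.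
Proof.
move=> hv hFU hK hdeg hKU; split.
- move=> v hvU; have hU : (0 < #|U|)%N by apply/card_gt0P; exists v.
  rewrite /avg_deg natrM !mulrA mulVf ?pnatr_eq0 // mul1r.
  by rewrite ler_pdivrMr ?ltr0n // -natrM ler_nat; apply: hdeg.
- move=> S hSU hS0.
  have hS : (0 < #|S|)%N by rewrite card_gt0.
  have hU : (0 < #|U|)%N by apply: leq_trans hS (subset_leq_card hSU).
  have ha : #|edges_in F S| <= K * #|S|.
    apply: (sum_tail_le (F := F) (tl := tl)) => //.
      by apply/subsetP => e; rewrite inE => /andP[].
    by move=> e; rewrite inE => /andP[he hes]; apply: (subsetP hes); apply: hv.
  apply: (@le_trans _ _ (((2 * K)%N)%:R)%R).
    by rewrite ler_pdivrMr ?ltr0n // -natrM ler_nat; lia.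
  rewrite /avg_deg mulrA ler_pdivlMr ?ltr0n // -!natrM ler_nat; lia.
Qed.
End GL.

End M4.
Module M5.
Import M1.
Import M2.
Import M3.
Import M4.
Set Implicit Arguments. Unset Strict Implicit. Unset Printing Implicit Defensive.
Import Order.TTheory GRing.Theory Num.Theory.

Section Layer.
Variable T : finType.
Implicit Types (E F : {set {set T}}) (tl : {set T} -> T).

Lemma valid_sub E F tl : F \subset E -> valid E tl -> valid F tl.
Proof. by move=> hFE hv e he; apply: hv; apply: (subsetP hFE). Qed.

Lemma simple_sub E F : F \subset E -> simple_edges E -> simple_edges F.
Proof. by move=> hFE hs e he; apply: hs; apply: (subsetP hFE). Qed.

Lemma od_deg F tl v : valid F tl -> od F tl v <= deg F v.
Proof.
move=> hv; apply: subset_leq_card; apply/subsetP => e; rewrite !inE.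
by case/andP => he /eqP <-; rewrite he hv.
Qed.

Lemma od_setD E F tl v : F \subset E -> od (E :\: F) tl v = od E tl v - od F tl v.
Proof.
move=> hFE; have hsub : outset F tl v \subset outset E tl v.
  by apply/subsetP => e; rewrite !inE => /andP[he ->]; rewrite (subsetP hFE).
rewrite /od -(setIidPr hsub) -cardsD; apply: eq_card => e; rewrite !inE.
case hF: (e \in F); case hE: (e \in E) => //=; last by rewrite andbF.
  by case: (tl e == v).
Qed.

Lemma layer k E tl : 0 < k -> simple_edges E -> valid E tl ->
  (forall v, od E tl v <= 2*k) ->
  exists S, exists F1, exists tl', [/\ F1 \subset E, is_graph S F1,
    uniformly_dense (2%:R : rat) S F1, valid (E :\: F1) tl' &
    forall v, od (E :\: F1) tl' v <= k].
Proof.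
move=> hk hs hv0 hb0.
have [tl' [S [hv hb hcl hS hnS]]] := reorient hs hv0 hb0.
pose B v := [set e in take k (enum (outset E tl' v))].
have hB1 v : B v \subset outset E tl' v.
  by apply/subsetP => e; rewrite inE => /mem_take; rewrite mem_enum.
have hB2 v : v \in S -> #|B v| = k.
  move=> hvS; rewrite cardsE; move/card_uniqP: (take_uniq k (enum_uniq (mem (outset E tl' v)))) ->.
  by rewrite size_takel // -cardE; apply: hS.
pose F1 := [set e in E | (tl' e \in S) && (e \in B (tl' e))].
have hF1E : F1 \subset E by apply/subsetP => e; rewrite inE => /andP[].
have hout v : outset F1 tl' v = if v \in S then B v else set0.
  apply/setP => e; rewrite !inE; case: ifP => hvS.
  - apply/idP/idP.
      by case/andP => /and3P[_ _ hB] /eqP hv'; rewrite inE -hv'.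
    move=> heB; have := subsetP (hB1 v) _ heB; rewrite inE => /andP[he /eqP htl].
    by rewrite he htl hvS eqxx; rewrite inE in heB; rewrite heB.
  - rewrite in_set0; apply/negP => /andP[/and3P[_ hS' _] /eqP htl].
    by rewrite htl hvS in hS'.
have hv1 : valid F1 tl' by apply: valid_sub hF1E hv.
have hod1 v : od F1 tl' v = if v \in S then k else 0.
  by rewrite /od hout; case: ifP => hvS; [apply: hB2|rewrite cards0].
have hF1S e : e \in F1 -> tl' e \in S by rewrite inE => /andP[_ /andP[]].
have hcard : #|F1| = k * #|S|.
  rewrite (card_part hF1S) mulnC -sum_nat_const; apply: eq_bigr => v hvS.
  by have := hod1 v; rewrite hvS.
exists S, F1, tl'; split => //.
- split; first by apply: simple_sub hF1E hs.
  by move=> e he; apply: hcl; [apply: (subsetP hF1E)|apply: hF1S].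
- apply: (GL (K := k) hv1).
  + by move=> e he; apply: hcl; [apply: (subsetP hF1E)|apply: hF1S].
  + by move=> v; rewrite hod1; case: ifP.
  + move=> v hvS; rewrite hcard leq_mul2r; apply/orP; right.
    by have := od_deg v hv1; rewrite hod1 hvS.
  + by rewrite hcard; lia.
- by apply: valid_sub hv; apply: subsetDl.
- move=> v.
  rewrite od_setD //.
  rewrite hod1; case: ifP => hvS; first by have := hb v; lia.
  by rewrite subn0; apply: hnS; rewrite hvS.
Qed.
End Layer.

End M5.
Module M6.
Import M1.
Import M2.
Import M3.
Import M4.
Import M5.
Set Implicit Arguments. Unset Strict Implicit. Unset Printing Implicit Defensive.
Import Order.TTheory GRing.Theory Num.Theory.

Section Final.
Variable T : finType.
Implicit Types (E F : {set {set T}}) (tl : {set T} -> T).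

Lemma final E tl : simple_edges E -> valid E tl -> (forall v, od E tl v <= 1) ->
  is_graph [set v | [exists e in E, v \in e]] E /\
  uniformly_dense (2%:R : rat) [set v | [exists e in E, v \in e]] E.
Proof.
move=> hs hv hb; set U := [set v | _].
have hEU e : e \in E -> e \subset U.
  by move=> he; apply/subsetP => v hve; rewrite inE; apply/existsP; exists e; rewrite he.
split; first by split.
apply: (GL (K := 1) hv hEU hb).
- move=> v; rewrite inE => /existsP[e /andP[he hve]].
  have h1 : 0 < deg E v.
    by apply/card_gt0P; exists e; rewrite inE he hve.
  apply: (@leq_trans (1 * #|U|)).
    apply: (sum_tail_le (F := E) (tl := tl)) => //.
    by move=> e' he'; apply: (subsetP (hEU e' he')); apply: hv.
  by rewrite leq_mul2r h1 orbT.
- pose p v := odflt set0 [pick e in E | v \in e].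
  have hp v : v \in U -> p v \in E /\ v \in p v.
    rewrite inE => /existsP[e0 he0]; rewrite /p; case: pickP => [e /andP[he hve]|/(_ e0)].
      by [].
    by rewrite he0.
  have hpU v : v \in U -> p v \in E by move=> /hp[].
  rewrite mul1n (card_part hpU) mulnC -sum_nat_const; apply: leq_sum => e he.
  have h2 : #|e| = 2 by rewrite (hs e he).
  rewrite -h2; apply: subset_leq_card; apply/subsetP => v.
  by rewrite inE => /andP[hvU /eqP <-]; have [] := hp v hvU.
Qed.

Lemma layers j : forall E tl, simple_edges E -> valid E tl ->
  (forall v, od E tl v <= 2 ^ j) ->
  exists Hs : seq ({set T} * {set {set T}}), [/\ size Hs <= j.+1,
     edge_decomposition E Hs &
     forall H, H \in Hs -> uniformly_dense (2%:R : rat) H.1 H.2].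
Proof.
elim: j => [|j IH] E tl hs hv hb.
  have [hg hud] := final hs hv hb.
  exists [:: ([set v | [exists e in E, v \in e]], E)]; split => //.
    split; first by case=> // _; split.
    split; first by case=> [|i] [|j] //.
    by move=> e he; exists 0.
  by move=> H; rewrite inE => /eqP ->.
have hk : 0 < 2 ^ j by rewrite expn_gt0.
have [S [F1 [tl' [hF1E hg hud hv' hb']]]] := layer hk hs hv (ltac:(by move=> v; rewrite -expnS; apply: hb)).
have hs' : simple_edges (E :\: F1) by apply: simple_sub hs; apply: subsetDl.
have [Hs [hsz [hd1 [hd2 hd3]] hU]] := IH _ _ hs' hv' hb'.
exists ((S, F1) :: Hs); split => //.
- split.
    case=> [|i] /= hi; first by split.
    have [g hsub] := hd1 i hi; split => //.
    by apply: subset_trans hsub (subsetDl _ _).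
  split.
    have hdis i : i < size Hs -> [disjoint F1 & (nth (set0, set0) Hs i).2].
      move=> hi; rewrite -setI_eq0; apply/eqP/setP => e; rewrite !inE.
      apply/negbTE/negP => /andP[he1 he2].
      have := subsetP (hd1 i hi).2 _ he2; rewrite inE he1 //.
    case=> [|i] [|i'] //= hi hi' hne.
    + by apply: hdis.
    + by rewrite disjoint_sym; apply: hdis.
    + by apply: hd2 => // hh; apply: hne; rewrite hh.
  move=> e he; case: (boolP (e \in F1)) => hF; first by exists 0.
  have [i hi hei] := hd3 e (ltac:(by rewrite inE hF he)).
  by exists i.+1.
- by move=> H; rewrite inE => /orP[/eqP ->|]; [|apply: hU].
Qed.
End Final.

End M6.
Import M1.
Import M2.
Import M3.
Import M4.
Import M5.
Import M6.

Lemma pair_eq (T : finType) (e : {set T}) v w : #|e| = 2 -> v \in e -> w \in e ->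
  v != w -> e = [set v; w].
Proof.
move=> He hv hw hvw; apply/esym/eqP.
rewrite eqEcard He cards2 hvw andbT; apply/subsetP => y; rewrite !inE.
by case/orP => /eqP ->.
Qed.

Arguments pair_eq {T e v w}.

Theorem mainTheorem6 :
  exists C : nat,
    forall (T : finType) (E : {set {set T}}),
      (2 <= #|T|)%N -> simple_edges E ->
      exists Hs : seq ({set T} * {set {set T}}),
        edge_decomposition E Hs /\
        (forall v : T, (appearances Hs v <= C * trunc_log 2 #|T|)%N) /\
        (forall H, H \in Hs -> uniformly_dense (2%:R : rat)%R H.1 H.2).
Proof.
exists 3 => T E hT hs.
have /card_gt0P [x0 _] : 0 < #|T| by lia.
pose tl (e : {set T}) := odflt x0 [pick x in e].
have hs2 e : e \in E -> #|e| = 2 by move=> he; rewrite (hs e he).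
have hv : valid E tl.
  move=> e he; rewrite /tl; case: pickP => [x hx //|h].
  by move: (hs2 e he); rewrite eq_card0.
have hb v : od E tl v <= #|T|.
  pose oth (e : {set T}) := odflt v [pick w in e :\ v].
  have hoth e : e \in outset E tl v -> oth e \in e /\ oth e != v.
    rewrite inE => /andP[he /eqP htl].
    have hve : v \in e by rewrite -htl hv.
    rewrite /oth; case: pickP => [w|h].
      by rewrite !inE => /andP[-> ->].
    have := cardsD1 v e; rewrite hve (hs2 e he) (eq_card0 h) //.
  rewrite /od -(card_in_imset (f := oth)); first by apply: max_card.
  move=> e e' he he' heq.
  have [h1 h2] := hoth e he; have [h1' h2'] := hoth e' he'.
  move: he he'; rewrite !inE => /andP[he /eqP htl] /andP[he' /eqP htl'].
  have hve : v \in e by rewrite -htl hv.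
  have hve' : v \in e' by rewrite -htl' hv.
  rewrite (pair_eq (hs2 e he) hve h1) 1?eq_sym //.
  by rewrite (pair_eq (hs2 e' he') hve' h1') 1?eq_sym // heq.
set J := trunc_log 2 #|T|.
have hlt : #|T| < 2 ^ J.+1 by apply: trunc_log_ltn.
have [Hs [hsz hdec hud]] := @layers _ J.+1 _ _ hs hv (fun v => leq_trans (hb v) (ltnW hlt)).
exists Hs; split => //; split => // v.
have hJ : 0 < J.
  case: (posnP J) => // hJ0; move: hlt; rewrite hJ0; lia.
by apply: leq_trans (count_size _ _) _; apply: leq_trans hsz _; lia.
Qed.
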